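(* Let $m,n,s,c$ be positive integers such that $2\leq s\leq n$ and $ms=2n$. A magic rectangle set $\mathrm{MRS}(m,n;s,2;c)$ exists if and only if $s\geq 4$ is even.
   Context: A partially filled array is an array in which some cells may be empty. A magic rectangle set with empty cells $\mathrm{MRS}(m,n;s,k;c)$ is a set of $c$ partially filled $m\times n$ arrays with integer entries such that each integer of $\{1,2,\ldots,nkc\}$ appears exactly once, in exactly one of the arrays (and no other entries occur); in every array each row contains exactly $s$ filled cells and each column exactly $k$ filled cells; and there exist integers $x,y$ such that in every array each row sums to $x$ and each column sums to $y$. *)

(* Defs.v *)
From mathcomp Require Import all_boot all_order.
Unset Printing Implicit Defensive.

(* A family of c partially filled m x n arrays: A t i j = None means the cell
   (i,j) of array t is empty, Some v means it holds the integer v.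
   Since all entries are required to lie in {1,...,n*k*c}, natural numbers
   suffice for the entries. *)
Definition is_MRS (m n s k c : nat) (A : 'I_c -> 'I_m -> 'I_n -> option nat) : Prop :=
  (forall t i j v, A t i j = Some v -> 1 <= v <= n * k * c) /\
  (forall v, 1 <= v <= n * k * c ->
     #|[set p : 'I_c * 'I_m * 'I_n | A p.1.1 p.1.2 p.2 == Some v]| = 1) /\
  (forall t i, #|[set j : 'I_n | A t i j != None]| = s) /\
  (forall t j, #|[set i : 'I_m | A t i j != None]| = k) /\
  (exists x y : nat,
     (forall t i, \sum_(j < n) odflt 0 (A t i j) = x) /\
     (forall t j, \sum_(i < m) odflt 0 (A t i j) = y)).

Definition MRS (m n s k c : nat) : Prop :=
  exists A : 'I_c -> 'I_m -> 'I_n -> option nat, is_MRS m n s k c A.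

(* Main.v *)
Require Import Defs.
From mathcomp Require Import all_boot all_order.
From mathcomp Require Import zify.
Set Implicit Arguments. Unset Strict Implicit. Unset Printing Implicit Defensive.

Lemma sum_blocks (m t : nat) (F : nat -> nat) :
  \sum_(j < m * t) F j = \sum_(b < m) \sum_(l < t) F (b * t + l).
Proof.
elim: m => [|m IH]; first by rewrite mul0n !big_ord0.
rewrite big_ord_recr /= -IH mulSn addnC.
rewrite -!(big_mkord xpredT) (@big_cat_nat _ _ _ (m*t) 0 (m*t+t) _ _ (leq0n _) (leq_addr t (m*t))) /=.
congr (_ + _).
rewrite -{1}(add0n (m*t)) big_addn. rewrite (_ : m*t+t-m*t = t); last lia.
rewrite big_mkord. by apply: eq_big => // l _; rewrite addnC.
Qed.

Lemma divB (b t l : nat) : l < t -> (b*t+l) %/ t = b.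
Proof. move=> lt. rewrite divnMDl ?divn_small ?addn0 //. by case: t lt. Qed.
Lemma modB (b t l : nat) : l < t -> (b*t+l) %% t = l.
Proof. move=> lt. by rewrite modnMDl modn_small. Qed.

Lemma sum_two (k : nat) (f : 'I_k -> nat) (a b : 'I_k) : a != b ->
  (forall i, i != a -> i != b -> f i = 0) -> \sum_i f i = f a + f b.
Proof.
move=> ab h; rewrite (bigD1 a) //= (bigD1 b) /=; last by rewrite eq_sym.
by rewrite big1 ?addn0 // => i /andP[ia ib]; exact: h.
Qed.

Definition PP m t c := m * t * c.
Definition YY m t c := (2 * PP m t c).+1.
Definition gval m t c (lab : nat -> nat -> nat) (sg : nat -> nat -> bool) tau j :=
  if sg tau j then (PP m t c).+1 + lab tau j else PP m t c - lab tau j.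
Definition gent m t c (pi : nat -> nat) lab sg tau (i : nat) j : option nat :=
  if i == j %/ t then Some (gval m t c lab sg tau j)
  else if i == pi (j %/ t) then Some (YY m t c - gval m t c lab sg tau j)
  else None.
Definition garr m t c pi lab sg : 'I_c -> 'I_m -> 'I_(m*t) -> option nat :=
  fun tau i j => gent m t c pi lab sg tau i j.

Lemma sum_const_ord (t k : nat) : \sum_(l < t) k = t * k.
Proof. by rewrite sum_nat_const card_ord. Qed.

Definition yof P v := if P < v then v - P.+1 else P - v.
Definition iof m t c (pi : nat -> nat) (sg : nat -> nat -> bool) tau j v :=
  if sg tau j == (PP m t c < v) then j %/ t else pi (j %/ t).

Lemma gent_some m t c pi lab sg tau i j v :
  lab tau j < PP m t c ->
  gent m t c pi lab sg tau i j = Some v ->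
  lab tau j = yof (PP m t c) v /\ i = iof m t c pi sg tau j v.
Proof.
rewrite /gent /gval /iof /yof /YY; set P := PP m t c; set L := lab tau j => hL.
case: ifP => [/eqP ->|_].
  case: (sg tau j) => -[<-].
    have -> : (P < P.+1 + L) = true by apply/idP; lia.
    split=> //; lia.
  have -> : (P < P - L) = false by apply/negbTE; lia.
  split=> //; lia.
case: ifP => [/eqP ->|//].
case: (sg tau j) => -[<-].
  have -> : (P < (2 * P).+1 - (P.+1 + L)) = false by apply/negbTE; lia.
  split=> //; lia.
have -> : (P < (2 * P).+1 - (P - L)) = true by apply/idP; lia.
split=> //; lia.
Qed.

Lemma gen_MRS m t c pi rho lab sg :
  0 < t ->
  (forall b, b < m -> pi b < m) ->
  (forall b, b < m -> pi b != b) ->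
  (forall i, i < m -> rho i < m) ->
  (forall i, i < m -> pi (rho i) = i) ->
  (forall b, b < m -> rho (pi b) = b) ->
  (forall tau j, tau < c -> j < m*t -> lab tau j < PP m t c) ->
  (forall tau1 tau2 j1 j2, tau1 < c -> tau2 < c -> j1 < m*t -> j2 < m*t ->
     lab tau1 j1 = lab tau2 j2 -> tau1 = tau2 /\ j1 = j2) ->
  (forall tau i, tau < c -> i < m ->
     \sum_(l < t) gval m t c lab sg tau (i*t+l) =
     \sum_(l < t) gval m t c lab sg tau (rho i * t + l)) ->
  MRS m (m*t) (t.*2) 2 c.
Proof.
move=> t0 hpi hpib hrho hpirho hrhopi hlab hinj hsum.
exists (@garr m t c pi lab sg).
have vr : forall tau j, tau < c -> j < m*t ->
   1 <= gval m t c lab sg tau j /\ gval m t c lab sg tau j < YY m t c.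
  move=> tau j ht hj; have := hlab tau j ht hj; rewrite /gval /YY.
  by case: (sg tau j); lia.
have jdiv : forall j, j < m * t -> j %/ t < m.
  by move=> j hj; rewrite ltn_divLR.
split.
  move=> tau i j v; rewrite /garr /gent.
  have [h1 h2] := vr tau j (ltn_ord tau) (ltn_ord j).
  rewrite (_ : m*t*2*c = 2 * PP m t c); last by rewrite /PP; lia.
  move: h2; rewrite /YY => h2.
  case: ifP => _; first by case=> <-; lia.
  by case: ifP => _ // [<-]; lia.
split.
  move=> v /andP[v1 v2].
  rewrite (_ : m*t*2*c = 2 * PP m t c) in v2; last by rewrite /PP; lia.
  have hy : yof (PP m t c) v < PP m t c by rewrite /yof; case: ifP => h; lia.
  pose F := fun p : 'I_c * 'I_(m*t) =>
    (Ordinal (hlab p.1 p.2 (ltn_ord _) (ltn_ord _)) : 'I_(PP m t c)).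
  have Finj : injective F.
    move=> [a1 b1] [a2 b2] /(congr1 val) /= e.
    have [e1 e2] := hinj _ _ _ _ (ltn_ord a1) (ltn_ord a2) (ltn_ord b1) (ltn_ord b2) e.
    by congr pair; apply: val_inj.
  have hc : #|'I_(PP m t c)| <= #|{: 'I_c * 'I_(m*t)}|.
    by rewrite card_prod !card_ord /PP mulnC.
  have /codomP [[tau0 j0] e0] := inj_card_onto Finj hc (Ordinal hy).
  have {}e0 : lab tau0 j0 = yof (PP m t c) v by move/(congr1 val): e0.
  have hi0 : iof m t c pi sg tau0 j0 v < m.
    by rewrite /iof; case: ifP => _; [apply: jdiv | apply/hpi/jdiv].
  rewrite (_ : [set p | _] = [set ((tau0, Ordinal hi0), j0)]) ?cards1 //.
  apply/setP => -[[tau i] j]; rewrite !inE /garr.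
  apply/eqP/eqP.
    move=> H; have [e1 e2] := gent_some (hlab _ _ (ltn_ord tau) (ltn_ord j)) H.
    rewrite -e0 in e1.
    have [t1 j1] := hinj _ _ _ _ (ltn_ord tau) (ltn_ord tau0) (ltn_ord j) (ltn_ord j0) e1.
    have ett : tau = tau0 by apply: val_inj.
    have ejj : j = j0 by apply: val_inj.
    subst tau0 j0; congr (_, _, _); apply: val_inj => /=; exact: e2.
  case=> -> -> ->; rewrite /gent /gval /iof /= /YY.
  have := hlab _ _ (ltn_ord tau0) (ltn_ord j0); rewrite e0 /yof.
  set P := PP m t c.
  have nb : (pi (j0 %/ t) == j0 %/ t) = false by apply/negbTE/hpib/jdiv.
  case: (sg tau0 j0); case: (ltnP P v) => h /=; rewrite ?eqxx ?nb ?eqxx => hl; congr Some; lia.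
split.
  move=> tau i.
  rewrite -sum1dep_card big_mkcond /= /garr.
  rewrite (sum_blocks m t (fun j => if gent m t c pi lab sg tau i j != None then 1 else 0)).
  have hi := ltn_ord i. have hri := hrho i hi.
  rewrite (@sum_two m _ i (Ordinal hri)); first last.
  - move=> b bi bri; apply: big1 => l _.
    rewrite /gent divB ?ltn_ord //.
    have -> : (val i == b) = false by apply/negbTE; rewrite eq_sym.
    case: (val i =P pi b) => [hb|//]; exfalso; move/negP: bri; apply.
    apply/eqP/val_inj => /=; rewrite hb hrhopi //.
  - rewrite -(inj_eq val_inj) /=; apply/eqP => e.
    by have := hpib _ hri; rewrite hpirho // -e eqxx.
  rewrite /gent.
  rewrite (eq_bigr (fun l => 1)); last first.
    move=> l _. rewrite divB ?ltn_ord // eqxx //.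
  have nri : (val i == rho i) = false.
    by apply/negbTE/eqP => e; have := hpib _ hri; rewrite hpirho // -e eqxx.
  rewrite [X in _ + X](eq_bigr (fun l => 1)); last first.
    by move=> l _; rewrite divB ?ltn_ord // hpirho // nri eqxx.
  by rewrite !sum_const_ord muln1 addnn.
split.
  move=> tau j.
  rewrite -sum1dep_card big_mkcond /= /garr.
  have hb := jdiv _ (ltn_ord j). have hpb := hpi _ hb.
  have nb : (pi (j %/ t) == j %/ t) = false by apply/negbTE/hpib.
  rewrite (@sum_two m _ (Ordinal hb) (Ordinal hpb)) /=.
  - by rewrite /gent eqxx nb eqxx.
  - by rewrite -val_eqE /= eq_sym nb.
  move=> i; rewrite -!val_eqE /= => /negbTE ib /negbTE ipb.
  by rewrite /gent ib ipb.
exists (t * YY m t c), (YY m t c).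
split.
  move=> tau i.
  rewrite /garr (sum_blocks m t (fun j => odflt 0 (gent m t c pi lab sg tau i j))).
  have hi := ltn_ord i. have hri := hrho i hi.
  have nri : (val i == rho i) = false.
    by apply/negbTE/eqP => e; have := hpib _ hri; rewrite hpirho // -e eqxx.
  rewrite (@sum_two m _ i (Ordinal hri)); first last.
  - move=> b bi bri; apply: big1 => l _.
    rewrite /gent divB ?ltn_ord //.
    have -> : (val i == b) = false by apply/negbTE; rewrite eq_sym.
    case: (val i =P pi b) => [hb|//]; exfalso; move/negP: bri; apply.
    apply/eqP/val_inj => /=; rewrite hb hrhopi //.
  - by rewrite -val_eqE /= nri.
  rewrite /gent /=.
  rewrite (eq_bigr (fun l : 'I_t => gval m t c lab sg tau (i * t + l))); last first.
    by move=> l _; rewrite divB ?ltn_ord // eqxx.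
  rewrite [X in _ + X](eq_bigr (fun l : 'I_t => YY m t c - gval m t c lab sg tau (rho i * t + l))); last first.
    by move=> l _; rewrite divB ?ltn_ord // hpirho // nri eqxx.
  rewrite hsum // -big_split /= -(sum_const_ord t (YY m t c)).
  apply: eq_bigr => l _; apply: subnKC.
  have hl : rho i * t + l < m * t.
    have := ltn_ord l; have : rho i < m := hri; nia.
  by have [_ /ltnW] := vr tau _ (ltn_ord tau) hl.
move=> tau j.
have hb := jdiv _ (ltn_ord j). have hpb := hpi _ hb.
have nb : (pi (j %/ t) == j %/ t) = false by apply/negbTE/hpib.
rewrite /garr (@sum_two m _ (Ordinal hb) (Ordinal hpb)) /=.
- rewrite /gent eqxx nb eqxx /=; apply: subnKC.
  by have [_ /ltnW] := vr tau _ (ltn_ord tau) (ltn_ord j).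
- by rewrite -val_eqE /= eq_sym nb.
move=> i; rewrite -!val_eqE /= => /negbTE ib /negbTE ipb.
by rewrite /gent ib ipb.
Qed.

Lemma gauss2 N : (\sum_(v < N.+1) v) * 2 = N * N.+1.
Proof.
elim: N => [|N IH]; first by rewrite big_ord_recr big_ord0.
rewrite big_ord_recr /= mulnDl IH; lia.
Qed.

Lemma total_sum m n c (A : 'I_c -> 'I_m -> 'I_n -> option nat) N :
  (forall t i j v, A t i j = Some v -> 1 <= v <= N) ->
  (forall v, 1 <= v <= N ->
     #|[set p : 'I_c * 'I_m * 'I_n | A p.1.1 p.1.2 p.2 == Some v]| = 1) ->
  \sum_(p : 'I_c * 'I_m * 'I_n) odflt 0 (A p.1.1 p.1.2 p.2) = \sum_(v < N.+1) v.
Proof.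
move=> hr hu.
rewrite (eq_bigr (fun p => \sum_(v < N.+1) (if A p.1.1 p.1.2 p.2 == Some (val v) then val v else 0))); last first.
  move=> p _; case E: (A p.1.1 p.1.2 p.2) => [w|] /=.
    have /andP[w1 w2] := hr _ _ _ _ E.
    have wl : w < N.+1 by [].
    rewrite (bigD1 (Ordinal wl)) //= eqxx big1 ?addn0 // => v /negbTE hv.
    case: eqP => // -[ew]; move: hv; rewrite -val_eqE /= ew eqxx //.
  by rewrite big1.
rewrite exchange_big /=; apply: eq_bigr => v _.
rewrite -big_mkcond /= sum_nat_cond_const.
case: (posnP v) => [->|v0]; first by rewrite muln0.
by rewrite hu ?mul1n // v0 -ltnS ltn_ord.
Qed.

Lemma total_rows m n c (A : 'I_c -> 'I_m -> 'I_n -> option nat) x :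
  (forall t i, \sum_(j < n) odflt 0 (A t i j) = x) ->
  \sum_(p : 'I_c * 'I_m * 'I_n) odflt 0 (A p.1.1 p.1.2 p.2) = c * (m * x).
Proof.
move=> hx.
rewrite -(pair_bigA _ (fun ti j => odflt 0 (A ti.1 ti.2 j))) /=.
rewrite -(pair_bigA _ (fun t i => \sum_j odflt 0 (A t i j))) /=.
under eq_bigr => t _ do under eq_bigr => i _ do rewrite hx.
by rewrite !sum_nat_const !card_ord.
Qed.

Lemma total_cols m n c (A : 'I_c -> 'I_m -> 'I_n -> option nat) y :
  (forall t j, \sum_(i < m) odflt 0 (A t i j) = y) ->
  \sum_(p : 'I_c * 'I_m * 'I_n) odflt 0 (A p.1.1 p.1.2 p.2) = c * (n * y).
Proof.
move=> hy.
rewrite -(pair_bigA _ (fun ti j => odflt 0 (A ti.1 ti.2 j))) /=.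
rewrite -(pair_bigA _ (fun t i => \sum_j odflt 0 (A t i j))) /=.
under eq_bigr => t _ do rewrite exchange_big /=.
under eq_bigr => t _ do under eq_bigr => j _ do rewrite hy.
by rewrite !sum_nat_const !card_ord.
Qed.



Lemma other k (f : 'I_k -> option nat) a u :
  #|[set i | f i != None]| = 2 -> f a = Some u ->
  exists b, b != a /\ exists w, f b = Some w /\ \sum_i odflt 0 (f i) = u + w.
Proof.
move=> /eqP /cards2P [x1 [y1 [xy E]]] fa.
have ain : a \in [set i | f i != None] by rewrite inE fa.
have key : forall b, b != a -> b \in [set i | f i != None] ->
    (forall i, i != a -> i != b -> f i = None) ->
    exists b, b != a /\ exists w, f b = Some w /\ \sum_i odflt 0 (f i) = u + w.
  move=> b ba; rewrite inE; case E2: (f b) => [w|] // _ hoth.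
  exists b; split=> //; exists w; split=> //.
  rewrite (sum_two (a:=a) (b:=b)) ?fa ?E2 // ?(eq_sym a) //.
  by move=> i ia ib; rewrite hoth.
move: ain; rewrite E !inE => /orP[] /eqP ea; subst a.
- apply: (key y1); first by rewrite eq_sym.
  + by rewrite E !inE eqxx orbT.
  move=> i ia ib; apply/eqP; apply/negPn/negP => hi.
  have : i \in [set i | f i != None] by rewrite inE.
  by rewrite E !inE (negbTE ia) (negbTE ib).
- apply: (key x1) => //.
  + by rewrite E !inE eqxx.
  move=> i ia ib; apply/eqP; apply/negPn/negP => hi.
  have : i \in [set i | f i != None] by rewrite inE.
  by rewrite E !inE (negbTE ia) (negbTE ib).
Qed.

Lemma neg_dir m n s c :
  0 < m -> 0 < n -> 0 < c -> 2 <= s -> m * s = 2 * n ->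
  MRS m n s 2 c -> 4 <= s /\ ~~ odd s.
Proof.
move=> m0 n0 c0 s2 ems [A [hr [hu [hrow [hcol [x [y [hx hy]]]]]]]].
have T1 := total_sum hr hu.
have T2 := total_rows hx. have T3 := total_cols hy.
have g := gauss2 (n*2*c).
have ey : y = (n*2*c).+1.
  have : (n*2*c) * y = (n*2*c) * (n*2*c).+1.
    by rewrite -g -T1 T3; lia.
  by move/eqP; rewrite eqn_pmul2l ?muln_gt0 ?n0 ?c0 // => /eqP.
have emx : m * x = n * y.
  by apply/eqP; rewrite -(eqn_pmul2l c0) -T2 -T3.
have e2x : 2 * x = s * y.
  apply/eqP; rewrite -(eqn_pmul2l n0); apply/eqP.
  have : s * (m * x) = s * (n * y) by rewrite emx.
  rewrite !mulnA (mulnC s m) ems -!mulnA => H.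
  by rewrite mulnCA H mulnCA.
have ev : ~~ odd s.
  apply/negP => os; move: e2x; rewrite ey => /(congr1 odd).
  rewrite !oddM /= os; by rewrite !oddM /= andbF.
split=> //.
case: (ltnP 3 s) => // hs.
have s2' : s = 2.
  have : s = 2 \/ s = 3 by lia.
  by case=> // es; rewrite es in ev.
subst s.
have emn : m = n by lia.
have exy : x = y by subst m; apply/eqP; rewrite -(eqn_pmul2l n0) emx.
have N1 : 1 <= 1 <= n * 2 * c by rewrite leqnn /=; rewrite muln_gt0 muln_gt0 n0 c0.
have := hu 1 N1 => h1.
have /card_gt0P [[[tau i] j]] : 0 < #|[set p : 'I_c * 'I_m * 'I_n | A p.1.1 p.1.2 p.2 == Some 1]|.
  by rewrite h1.
rewrite inE /= => /eqP e1.
have [j2 [j2j [w [e2 sr]]]] := other (hrow tau i) e1.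
rewrite hx in sr.
have [i2 [i2i [w2 [e3 sc]]]] := other (hcol tau j2) e2.
rewrite hy in sc.
have ew2 : w2 = 1 by lia.
subst w2.
have : 1 < #|[set p : 'I_c * 'I_m * 'I_n | A p.1.1 p.1.2 p.2 == Some 1]|.
  apply/card_gt1P; exists (tau, i, j), (tau, i2, j2).
  rewrite !inE /= e1 e3 !eqxx /=; split=> //.
  by rewrite !xpair_eqE eqxx /= negb_and (eq_sym j) j2j orbT.
by rewrite h1.
Qed.

Lemma sum_pairs u (f : nat -> nat) K :
  (forall q, q < u -> f (2*q) + f (2*q).+1 = K) -> \sum_(l < 2*u) f l = u * K.
Proof.
elim: u => [|u IH] h; first by rewrite big_ord0.
rewrite (_ : 2 * u.+1 = (2*u).+2); last lia.
rewrite big_ord_recr big_ord_recr /= IH; last by move=> q hq; apply: h; lia.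
rewrite -addnA h //; lia.
Qed.

Definition piC m b := if b.+1 < m then b.+1 else 0.
Definition rhoC m i := if 0 < i then i.-1 else m.-1.

Lemma piC_props m : 2 <= m ->
  [/\ (forall b, b < m -> piC m b < m),
      (forall b, b < m -> piC m b != b),
      (forall i, i < m -> rhoC m i < m),
      (forall i, i < m -> piC m (rhoC m i) = i) &
      (forall b, b < m -> rhoC m (piC m b) = b)].
Proof.
move=> m2; split=> b hb; rewrite /piC /rhoC.
- case: ifP => ?; lia.
- apply/eqP; case: ifP => ?; lia.
- case: ifP => ?; lia.
- by case: (ltnP 0 b) => h0 /=; case: ifP => ?; lia.
- by case: (ltnP b.+1 m) => h0 /=; lia.
Qed.

Lemma lt_block a c x n : a < c -> x < n -> a * n + x < n * c.
Proof. move=> ha hx; nia. Qed.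

Lemma dm_uniq q1 q2 a1 a2 n : a1 < n -> a2 < n -> q1 * n + a1 = q2 * n + a2 ->
  q1 = q2 /\ a1 = a2.
Proof. move=> h1 h2 e; have eq : q1 = q2 by nia. by subst; split=> //; lia. Qed.

Definition labA m t (tau j : nat) := tau * (m * t) + j.
Definition sgA t (tau j : nat) := ~~ odd (j %% t).

Lemma caseA m u c : 2 <= m -> 0 < u -> MRS m (m * (2 * u)) ((2 * u).*2) 2 c.
Proof.
move=> m2 u0.
have [h1 h2 h3 h4 h5] := piC_props m2.
apply: (@gen_MRS m (2*u) c (piC m) (rhoC m) (labA m (2*u)) (sgA (2*u))) => //.
- lia.
- by move=> tau j ht hj; rewrite /labA /PP; nia.
- move=> t1 t2 j1 j2 ht1 ht2 hj1 hj2; rewrite /labA => e. exact: dm_uniq e.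
suff key : forall tau b, tau < c -> b < m ->
  \sum_(l < 2 * u) gval m (2 * u) c (labA m (2 * u)) (sgA (2 * u)) tau (b * (2 * u) + l)
  = u * (2 * PP m (2*u) c).
  by move=> tau i ht hi; rewrite !key //; apply: h3.
move=> tau b ht hb.
apply: (sum_pairs (f := fun l => gval m (2*u) c (labA m (2*u)) (sgA (2*u)) tau (b*(2*u)+l))) => q hq.
rewrite /gval /sgA /labA !modB; try lia.
have -> : odd (2 * q) = false by lia.
have -> : odd (2 * q).+1 = true by lia.
have : tau * (m * (2 * u)) + (b * (2 * u) + (2 * q).+1) < PP m (2*u) c.
  rewrite /PP; apply: lt_block => //; rewrite [m * _]mulnC; apply: lt_block => //; lia.
rewrite /=; lia.
Qed.

Definition sig1 m b := if b + m./2 < m then b + m./2 else b + m./2 - m.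
Definition sig2 m b := 3 * m./2 - b - sig1 m b.
Definition sigl m l b := if l == 0 then b else if l == 1 then sig1 m b else sig2 m b.
Definition phiB m t j := if j %% t < 3 then sigl m (j %% t) (j %/ t) * t + j %% t else j.
Definition labB m t (tau j : nat) := tau * (m * t) + phiB m t j.
Definition sgB t (tau j : nat) := (j %% t < 3) || odd (j %% t).

Lemma sig_props m : odd m ->
  (forall b, b < m -> sig1 m b < m /\ sig2 m b < m /\ b + sig1 m b + sig2 m b = 3 * m./2) /\
  (forall b1 b2, b1 < m -> b2 < m -> sig1 m b1 = sig1 m b2 -> b1 = b2) /\
  (forall b1 b2, b1 < m -> b2 < m -> sig2 m b1 = sig2 m b2 -> b1 = b2).
Proof.
move=> om; split; [|split].
- move=> b hb; rewrite /sig2 /sig1; case: ifP => ?; lia.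
- move=> b1 b2 h1 h2; rewrite /sig1; case: ifP => ?; case: ifP => ?; lia.
- move=> b1 b2 h1 h2; rewrite /sig2 /sig1; case: ifP => ?; case: ifP => ?; lia.
Qed.

Lemma sum_split3 u (f : nat -> nat) :
  \sum_(l < 3 + 2 * u) f l = \sum_(l < 3) f l + \sum_(l < 2 * u) f (3 + l).
Proof. by rewrite big_split_ord. Qed.

Lemma caseB m u c : 3 <= m -> odd m -> MRS m (m * (3 + 2 * u)) ((3 + 2 * u).*2) 2 c.
Proof.
move=> m3 om.
have m2 : 2 <= m by lia.
have [h1 h2 h3 h4 h5] := piC_props m2.
have [sp [s1i s2i]] := sig_props om.
set t := 3 + 2 * u.
have t3 : 3 <= t by rewrite /t; lia.
have sigl_lt : forall l b, b < m -> sigl m l b < m.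
  move=> l b hb; rewrite /sigl; have [? [? _]] := sp b hb.
  by case: ifP => _ //; case: ifP.
have phi_lt : forall j, j < m * t -> phiB m t j < m * t.
  move=> j hj; rewrite /phiB; case: ifP => // hl.
  rewrite [m * t]mulnC; apply: lt_block; last by rewrite ltn_mod; lia.
  by apply: sigl_lt; rewrite ltn_divLR //; lia.
apply: (@gen_MRS m t c (piC m) (rhoC m) (labB m t) (sgB t)) => //.
- by move=> tau j ht hj; rewrite /labB /PP; apply: lt_block => //; apply: phi_lt.
- move=> t1 t2 j1 j2 ht1 ht2 hj1 hj2; rewrite /labB => e.
  have [-> e2] := dm_uniq (phi_lt _ hj1) (phi_lt _ hj2) e.
  split=> //.
  have el : j1 %% t = j2 %% t.
    move/(congr1 (modn^~ t)): e2; rewrite /phiB.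
    by case: ifP => l1; case: ifP => l2; rewrite ?modnMDl ?modn_mod.
  rewrite (divn_eq j1 t) (divn_eq j2 t) el; congr (_ * _ + _).
  move: e2; rewrite /phiB el; case: ifP => hl; last first.
    by move=> e2; rewrite e2.
  have hd1 : j1 %/ t < m by rewrite ltn_divLR //; lia.
  have hd2 : j2 %/ t < m by rewrite ltn_divLR //; lia.
  have hlt : j2 %% t < t by rewrite ltn_mod; lia.
  move/(dm_uniq hlt hlt) => [e3 _]; move: e3.
  rewrite /sigl; case: ifP => _ //; case: ifP => _; [exact: s1i | exact: s2i].
suff key : forall tau b, tau < c -> b < m ->
  \sum_(l < t) gval m t c (labB m t) (sgB t) tau (b * t + l)
  = 3 * (PP m t c).+1 + 3 * (tau * (m * t)) + t * (3 * m./2) + 3 + u * (2 * PP m t c).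
  by move=> tau i ht hi; rewrite !key //; apply: h3.
move=> tau b ht hb.
rewrite /t (sum_split3 u (fun l => gval m (3 + 2 * u) c (labB m (3 + 2 * u)) (sgB (3 + 2 * u)) tau (b * (3 + 2 * u) + l))) -/t.
congr (_ + _).
  rewrite !big_ord_recr big_ord0 /= /gval /sgB /labB /phiB !modB ?divB //; try lia.
  rewrite /sigl /=.
  have [_ [_ e]] := sp b hb.
  lia.
apply: (sum_pairs (f := fun l => gval m t c (labB m t) (sgB t) tau (b * t + (3 + l)))) => q hq.
rewrite /gval /sgB /labB /phiB !modB; try lia.
have -> : (3 + 2 * q < 3) = false by lia.
have -> : ((3 + (2 * q).+1) < 3) = false by lia.
have -> : odd (3 + 2 * q) = true by lia.
have -> : odd (3 + (2 * q).+1) = false by lia.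
have : tau * (m * t) + (b * t + (3 + (2 * q).+1)) < PP m t c.
  rewrite /PP; apply: lt_block => //; rewrite [m * _]mulnC; apply: lt_block => //; lia.
rewrite /=; lia.
Qed.

Definition piS (b : nat) := if odd b then b.-1 else b.+1.

Lemma piS_props m : ~~ odd m ->
  [/\ (forall b, b < m -> piS b < m),
      (forall b, b < m -> piS b != b),
      (forall i, i < m -> piS i < m),
      (forall i, i < m -> piS (piS i) = i) &
      (forall b, b < m -> piS (piS b) = b)].
Proof.
move=> em.
have A1 : forall b, b < m -> piS b < m by move=> b hb; rewrite /piS; case: ifP => ?; lia.
have A2 : forall b, piS (piS b) = b.
  move=> b; rewrite /piS; case ob: (odd b) => /=; case: ifP => ?; lia.
split=> // b hb; rewrite /piS; apply/eqP; case: ifP => ?; lia.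
Qed.

Definition Tt (H e : bool) (l : nat) : nat :=
  nth 0 (if H then (if e then [:: 7; 8; 9] else [:: 3; 10; 11])
         else (if e then [:: 1; 2; 6] else [:: 0; 4; 5])) l.

Lemma Tt_lt H e l : Tt H e l < 12.
Proof. rewrite /Tt. case: H; case: e; case: l => [|[|[|l]]] //=. all: by rewrite nth_nil. Qed.

Lemma Tt_inj H1 e1 l1 H2 e2 l2 : l1 < 3 -> l2 < 3 -> Tt H1 e1 l1 = Tt H2 e2 l2 ->
  [/\ H1 = H2, e1 = e2 & l1 = l2].
Proof.
case: l1 => [|[|[|l1]]] // _; case: l2 => [|[|[|l2]]] // _;
by case: H1; case: e1; case: H2; case: e2.
Qed.

Definition dl M c := odd (c * M).
Definition GG M t (tau j : nat) := tau * M + (j %/ t)./2.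

Definition labC M t c (tau j : nat) :=
  if j %% t < 3 then
    (if GG M t tau j < dl M c then 3 * odd (j %/ t) + j %% t
     else 6 * dl M c + 12 * ((GG M t tau j - dl M c)./2) +
          Tt (odd (GG M t tau j - dl M c)) (odd (j %/ t)) (j %% t))
  else 6 * (c * M) + (tau * (2 * M) + j %/ t) * (t - 3) + (j %% t - 3).

Definition sgC M t c (tau j : nat) :=
  if j %% t < 3 then
    (if GG M t tau j < dl M c then ~~ odd (j %/ t) || (j %% t != 1) else true)
  else odd (j %% t).

Lemma caseC M u c : 0 < M -> MRS (2 * M) (2 * M * (3 + 2 * u)) ((3 + 2 * u).*2) 2 c.
Proof.
move=> M0.
set m := 2 * M. set t := 3 + 2 * u.
have em : ~~ odd m by rewrite /m; lia.
have t3 : 3 <= t by rewrite /t; lia.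
have [h1 h2 h3 h4 h5] := piS_props em.
have ePP : PP m t c = 6 * (c * M) + c * m * (t - 3).
  rewrite /PP /m /t; nia.
have hG : forall tau j, tau < c -> j < m * t -> GG M t tau j < c * M.
  move=> tau j ht hj; rewrite /GG [c * M]mulnC; apply: lt_block => //.
  have : j %/ t < m by rewrite ltn_divLR //; lia.
  rewrite /m; lia.
have small : forall tau j, tau < c -> j < m * t -> j %% t < 3 -> labC M t c tau j < 6 * (c * M).
  move=> tau j ht hj hl; have := hG _ _ ht hj; rewrite /labC hl /dl.
  have := Tt_lt (odd (GG M t tau j - odd (c * M))) (odd (j %/ t)) (j %% t).
  move: (Tt _ _ _) => T; move: (GG M t tau j) (c * M) => G K.
  move: (odd (j %/ t)) (j %% t) hl => e l hl.
  move=> hT hGK; case: ifP => hc; clear -hl hT hGK hc; lia.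
have big : forall tau j, tau < c -> j < m * t -> 3 <= j %% t ->
    6 * (c * M) <= labC M t c tau j < PP m t c.
  move=> tau j ht hj hl; rewrite /labC ltnNge hl /= ePP.
  apply/andP; split; first by rewrite -addnA leq_addr.
  rewrite -addnA ltn_add2l [c * m * _]mulnC; apply: lt_block.
    rewrite [c * m]mulnC; apply: lt_block => //.
    by rewrite ltn_divLR //; lia.
  have : j %% t < t by rewrite ltn_mod; lia.
  lia.
apply: (@gen_MRS m t c piS piS (labC M t c) (sgC M t c)) => //.
- move=> tau j ht hj; case: (ltnP (j %% t) 3) => hl.
    have := small _ _ ht hj hl; rewrite ePP; lia.
  by case/andP: (big _ _ ht hj hl).
- move=> t1 t2 j1 j2 ht1 ht2 hj1 hj2 e.
  have hb1 : j1 %/ t < m by rewrite ltn_divLR //; lia.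
  have hb2 : j2 %/ t < m by rewrite ltn_divLR //; lia.
  have hl1 : j1 %% t < t by rewrite ltn_mod; lia.
  have hl2 : j2 %% t < t by rewrite ltn_mod; lia.
  suff [-> hb hl] : [/\ t1 = t2, j1 %/ t = j2 %/ t & j1 %% t = j2 %% t].
    by split=> //; rewrite (divn_eq j1 t) (divn_eq j2 t) hb hl.
  case: (ltnP (j1 %% t) 3) => l1; case: (ltnP (j2 %% t) 3) => l2.
  + have g1 := hG _ _ ht1 hj1; have g2 := hG _ _ ht2 hj2.
    move: e; rewrite /labC l1 l2; rewrite /GG in g1 g2 *.
    have := Tt_inj (H1 := odd (t1 * M + (j1 %/ t)./2 - dl M c)) (e1 := odd (j1 %/ t))
       (H2 := odd (t2 * M + (j2 %/ t)./2 - dl M c)) (e2 := odd (j2 %/ t)) l1 l2.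
    have := Tt_lt (odd (t1 * M + (j1 %/ t)./2 - dl M c)) (odd (j1 %/ t)) (j1 %% t).
    have := Tt_lt (odd (t2 * M + (j2 %/ t)./2 - dl M c)) (odd (j2 %/ t)) (j2 %% t).
    move: (Tt (odd (t1 * M + (j1 %/ t)./2 - dl M c)) (odd (j1 %/ t)) (j1 %% t)) => T1.
    move: (Tt (odd (t2 * M + (j2 %/ t)./2 - dl M c)) (odd (j2 %/ t)) (j2 %% t)) => T2.
    move: (j1 %/ t) (j2 %/ t) (j1 %% t) (j2 %% t) hb1 hb2 l1 l2 g1 g2 => b1 b2 a1 a2 hb1 hb2 l1 l2 g1 g2.
    rewrite /dl; move: (c * M) g1 g2 => K g1 g2.
    move=> hT2 hT1 tinj.
    case: ifP => s1; case: ifP => s2 e.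
    * have et1 : t1 = 0.
        move: s1; clear -M0; case: t1 => // t1'; rewrite mulSn; lia.
      have et2 : t2 = 0.
        move: s2; clear -M0; case: t2 => // t2'; rewrite mulSn; lia.
      subst t1 t2; rewrite !mul0n !add0n in s1 s2.
      split=> //; clear -s1 s2 e l1 l2; lia.
    * clear -s1 s2 e l1 l2 hT1 hT2; lia.
    * clear -s1 s2 e l1 l2 hT1 hT2; lia.
    * have [eq1 eq2] : (t1 * M + b1./2 - odd K)./2 = (t2 * M + b2./2 - odd K)./2 /\ T1 = T2.
        by apply: (@dm_uniq _ _ _ _ 12) => //; lia.
      have [ea eb ec] := tinj eq2.
      have eG : t1 * M + b1./2 = t2 * M + b2./2 by lia.
      have hM1 : b1./2 < M by rewrite /m in hb1; lia.
      have hM2 : b2./2 < M by rewrite /m in hb2; lia.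
      have [et eh] := dm_uniq hM1 hM2 eG.
      split=> //; lia.
  + have := small _ _ ht1 hj1 l1; have := big _ _ ht2 hj2 l2; rewrite e; lia.
  + have := small _ _ ht2 hj2 l2; have := big _ _ ht1 hj1 l1; rewrite e; lia.
  + move: e; rewrite /labC (leq_gtF l1) (leq_gtF l2) => e.
    have e' : (t1 * (2 * M) + j1 %/ t) * (t - 3) + (j1 %% t - 3) =
              (t2 * (2 * M) + j2 %/ t) * (t - 3) + (j2 %% t - 3) by lia.
    have a1 : j1 %% t - 3 < t - 3 by lia.
    have a2 : j2 %% t - 3 < t - 3 by lia.
    have [ex el] := dm_uniq a1 a2 e'.
    have [et eb] := dm_uniq hb1 hb2 ex.
    split=> //; lia.
pose FC tau p := if tau * M + p < dl M c then 3 * PP m t c + 6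
  else 3 * (PP m t c).+1 + 3 * (6 * dl M c + 12 * ((tau * M + p - dl M c)./2))
       + (if odd (tau * M + p - dl M c) then 24 else 9).
suff key : forall tau b, tau < c -> b < m ->
  \sum_(l < t) gval m t c (labC M t c) (sgC M t c) tau (b * t + l)
  = FC tau b./2 + u * (2 * PP m t c).
  move=> tau i ht hi; rewrite !key //; last exact: h3.
  by rewrite (_ : (piS i)./2 = i./2) // /piS; case: ifP => ?; lia.
move=> tau b ht hb.
rewrite /t (sum_split3 u (fun l => gval m (3 + 2 * u) c (labC M (3 + 2 * u) c) (sgC M (3 + 2 * u) c) tau (b * (3 + 2 * u) + l))) -/t.
congr (_ + _).
  rewrite !big_ord_recr big_ord0 /= /gval /sgC /labC /GG !modB ?divB //; try lia.
  rewrite /FC /=.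
  have P6 : 6 <= PP m t c.
    rewrite /PP /m /t; have : 1 <= c by lia. clear -M0; nia.
  move: (tau * M + b./2) (dl M c) (odd b) => G d e.
  case: (ltnP G d) => hGd /=.
    by case: e => /=; lia.
  by case: (odd (G - d)); case: e; rewrite /Tt /=; lia.
apply: (sum_pairs (f := fun l => gval m t c (labC M t c) (sgC M t c) tau (b * t + (3 + l)))) => q hq.
have hj1 : b * t + (3 + 2 * q) < m * t.
  rewrite [m * t]mulnC; apply: lt_block => //; lia.
have hj2 : b * t + (3 + (2 * q).+1) < m * t.
  rewrite [m * t]mulnC; apply: lt_block => //; lia.
have hb2 : 3 <= (b * t + (3 + (2 * q).+1)) %% t by rewrite modB; lia.
have := big _ _ ht hj2 hb2.
rewrite /gval /sgC /labC !modB; try lia.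
have -> : (3 + 2 * q < 3) = false by lia.
have -> : ((3 + (2 * q).+1) < 3) = false by lia.
have -> : odd (3 + 2 * q) = true by lia.
have -> : odd (3 + (2 * q).+1) = false by lia.
by rewrite /= !divB; try lia.
Qed.

Unset Implicit Arguments.

Theorem mainTheorem5 (m n s c : nat) :
  0 < m -> 0 < n -> 0 < c -> 2 <= s <= n -> m * s = 2 * n ->
  (MRS m n s 2 c <-> (4 <= s /\ ~~ odd s)).
Proof.
move=> m0 n0 c0 /andP[s2 sn] ems; split.
  by apply: neg_dir.
move=> [s4 es].
set t := s./2.
have est : s = t.*2 by rewrite /t; lia.
have ent : n = m * t by rewrite /t; lia.
have m2 : 2 <= m.
  have : 2 * t <= m * t by lia.
  have : 0 < t by rewrite /t; lia.
  clear; nia.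
case ot: (odd t).
  set u := (t - 3)./2.
  have etu : t = 3 + 2 * u by rewrite /u; lia.
  case om: (odd m).
    rewrite ent est etu; apply: caseB => //; lia.
  set M := m./2.
  have emM : m = 2 * M by rewrite /M; lia.
  rewrite ent est etu emM; apply: caseC; lia.
set u := t./2.
have etu : t = 2 * u by rewrite /u; lia.
rewrite ent est etu; apply: caseA => //; lia.
Qed.
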